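(* Let $G$ be a finitely generated free abelian group and $g,h\in G$ such that the subgroup $\langle g,h\rangle$ has rank $2$. Then for any choice of signs, $1\pm g$ and $1\pm h$ are relatively prime in the group ring $\mathbb{Z}[G]$.
   Context: $\mathbb{Z}[G]$ is the integral group ring of $G$ (a unique factorization domain); relatively prime means having no common non-unit factor. *)

(* Defs.v *)
(* The group ring Z[G] of the free abelian group G = Z^n,
   realised as finitely supported functions G -> int with convolution. *)
From HB Require Import structures.
From mathcomp Require Import all_boot all_order all_algebra.
From mathcomp Require Import finmap.
Set Implicit Arguments. Unset Strict Implicit. Unset Printing Implicit Defensive.
Import Order.TTheory GRing.Theory Num.Theory.
Local Open Scope ring_scope.

Definition FAb (n : nat) := 'rV[int]_n.

Definition ZG (n : nat) := {fsfun FAb n -> int with 0}.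

Definition gdelta n (g : FAb n) : ZG n := [fsfun x in [fset g]%fset => 1 | 0].

Definition gone n : ZG n := gdelta 0.

Definition gadd n (a b : ZG n) : ZG n :=
  [fsfun x in (finsupp a `|` finsupp b)%fset => a x + b x | 0].

Definition gopp n (a : ZG n) : ZG n := [fsfun x in finsupp a => - a x | 0].

Definition gmul n (a b : ZG n) : ZG n :=
  [fsfun x in [fset (u + v)%R | u in finsupp a, v in finsupp b]%fset =>
     \sum_(u <- finsupp a) a u * b (x - u) | 0].

Definition gdvd n (d a : ZG n) : Prop := exists c, gmul d c = a.
Definition gunit n (d : ZG n) : Prop := exists e, gmul d e = gone n.

Definition grelprime n (a b : ZG n) : Prop :=
  forall d, gdvd d a -> gdvd d b -> gunit d.

Definition onepm n (s : bool) (g : FAb n) : ZG n :=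
  gadd (gone n) (if s then gdelta g else gopp (gdelta g)).

Definition rank2 n (g h : FAb n) : Prop :=
  forall a b : int, a *: g + b *: h = 0 -> a = 0 /\ b = 0.

(* Main.v *)
Require Import Defs.
From HB Require Import structures.
From mathcomp Require Import all_boot all_order all_algebra.
From mathcomp Require Import finmap zify ring.
Set Implicit Arguments. Unset Strict Implicit. Unset Printing Implicit Defensive.
Import Order.TTheory GRing.Theory Num.Theory.
Local Open Scope ring_scope.


Section S.
Variable n : nat.
Implicit Types (a b d c e f : ZG n) (x y u v g h : FAb n).

Lemma gdeltaE g x : gdelta g x = if x == g then 1 else 0.
Proof. by rewrite /gdelta fsfunE in_fset1. Qed.

Lemma goneE x : gone n x = if x == 0 then 1 else 0.
Proof. exact: gdeltaE. Qed.

Lemma gaddE a b x : gadd a b x = a x + b x.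
Proof.
rewrite /gadd fsfunE; case: ifP => // /negbT.
rewrite in_fsetU negb_or !mem_finsupp !negbK => /andP[/eqP -> /eqP ->].
by rewrite addr0.
Qed.

Lemma goppE a x : gopp a x = - a x.
Proof.
rewrite /gopp fsfunE; case: ifP => // /negbT.
by rewrite mem_finsupp negbK => /eqP ->; rewrite oppr0.
Qed.

Lemma gmulE d c x : gmul d c x = \sum_(u <- finsupp d) d u * c (x - u).
Proof.
rewrite /gmul fsfunE; case: ifP => // /negbT Hx.
rewrite big_seq big1 // => u ud.
case: (eqVneq (c (x - u)) 0) => [-> |cx]; first by rewrite mulr0.
case/negP: Hx; have -> : x = u + (x - u) by rewrite addrC subrK.
by apply: in_imfset2 => //=; rewrite mem_finsupp.
Qed.
End S.
Fixpoint lexlt (s t : seq int) : bool :=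
  match s, t with
  | x :: s', y :: t' => (x < y) || ((x == y) && lexlt s' t')
  | _, _ => false
  end.

Fixpoint addseq (s t : seq int) : seq int :=
  match s, t with
  | x :: s', y :: t' => (x + y) :: addseq s' t'
  | _, _ => [::]
  end.

Lemma lexlt_irr s : ~~ lexlt s s.
Proof. by elim: s => //= x s IH; rewrite ltxx eqxx /= IH. Qed.

Lemma lexlt_trans s t r : lexlt s t -> lexlt t r -> lexlt s r.
Proof.
elim: s t r => [|x s IH] [|y t] [|z r] //=.
case/orP=> [xy|/andP[/eqP <- st]]; case/orP=> [yz|/andP[/eqP <- tr]].
- by rewrite (lt_trans xy yz).
- by rewrite xy.
- by rewrite yz.
- by rewrite eqxx (IH _ _ st tr) orbT.
Qed.

Lemma lexlt_total s t : size s = size t -> s = t \/ lexlt s t \/ lexlt t s.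
Proof.
elim: s t => [|x s IH] [|y t] //=; first by left.
move=> [] Hst.
case: (ltgtP x y) => [xy|xy|<-]; [by right; left|by right; right|].
rewrite /=.
by case: (IH _ Hst) => [->|[st|ts]]; [left|right; left|right; right].
Qed.

Lemma lexlt_add s t w : size s = size w -> size t = size w ->
  lexlt s t -> lexlt (addseq s w) (addseq t w).
Proof.
elim: s t w => [|x s IH] [|y t] [|z w] //= [Hs] [Ht].
case/orP=> [xy|/andP[/eqP <- st]]; first by rewrite ltrD2r xy.
by rewrite eqxx ltxx /= IH.
Qed.

Lemma addseq_map (T : Type) (f g : T -> int) (l : seq T) :
  addseq (map f l) (map g l) = map (fun i => f i + g i) l.
Proof. by elim: l => //= x l ->. Qed.

Lemma maxex (T : eqType) (lt : rel T) :
  (forall x y z, lt x y -> lt y z -> lt x z) ->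
  (forall x y, x != y -> lt x y || lt y x) ->
  forall s : seq T, s != [::] ->
  exists2 a, a \in s & forall u, u \in s -> u = a \/ lt u a.
Proof.
move=> tr tot; elim=> [//|x s IH] _.
case: (eqVneq s [::]) => [->|/IH [a ain amax]].
  by exists x; rewrite ?inE // => u; rewrite inE => /eqP ->; left.
case: (eqVneq x a) => [xa|xa].
  exists a; first by rewrite inE ain orbT.
  by move=> u; rewrite inE => /orP [/eqP ->|/amax]; [left|].
case/orP: (tot _ _ xa) => [xlt|alt].
  exists a; first by rewrite inE ain orbT.
  by move=> u; rewrite inE => /orP [/eqP ->|/amax]; [right|].
exists x; first by rewrite inE eqxx.
move=> u; rewrite inE => /orP [/eqP ->|/amax [->|ua]]; [left|right|right] => //.
exact: tr ua alt.
Qed.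

Section Top.
Variable n : nat.
Variable lt : rel (FAb n).
Hypothesis ltirr : forall x, ~~ lt x x.
Hypothesis lttr : forall x y z, lt x y -> lt y z -> lt x z.
Hypothesis lttot : forall x y, x != y -> lt x y || lt y x.
Hypothesis ltadd : forall x y w, lt x y -> lt (x + w) (y + w).

Lemma top (d c : ZG n) : (exists x, d x != 0) -> (exists y, c y != 0) ->
  exists a b, [/\ d a != 0, c b != 0, (forall u, d u != 0 -> u = a \/ lt u a),
     (forall u, c u != 0 -> u = b \/ lt u b) & gmul d c (a + b) = d a * c b].
Proof.
move=> [x dx] [y cy].
have nemp (e : ZG n) z : e z != 0 -> (finsupp e : seq _) != [::].
  by move=> ez; apply/eqP => E; move: ez; rewrite -mem_finsupp; rewrite -[z \in _]/(z \in (finsupp e : seq _)) E.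
have [a ain amax] := maxex lttr lttot (nemp _ _ dx).
have [b bin bmax] := maxex lttr lttot (nemp _ _ cy).
have da : d a != 0 by rewrite -mem_finsupp.
have cb : c b != 0 by rewrite -mem_finsupp.
exists a, b; split => //.
- by move=> u du; apply: amax; rewrite mem_finsupp.
- by move=> u cu; apply: bmax; rewrite mem_finsupp.
rewrite gmulE (bigD1_seq a) //=; last exact: fset_uniq.
rewrite addrAC subrr add0r big_seq_cond big1 ?addr0 // => u /andP [us una].
case: (eqVneq (c (a + b - u)) 0) => [->|cu]; first by rewrite mulr0.
have ltua : lt u a by case: (amax u us) => // E; rewrite E eqxx in una.
have := ltadd (b - u) ltua.
have -> : u + (b - u) = b by rewrite addrC subrK.
have -> : a + (b - u) = a + b - u by rewrite addrA.
move=> lt1.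
have := bmax (a + b - u); rewrite mem_finsupp => /(_ cu) [E|lt2].
  by rewrite E (negPf (ltirr _)) in lt1.
by have := ltirr b; rewrite (lttr lt1 lt2).
Qed.
End Top.

Section Level.
Variable n : nat.
Variable phi : FAb n -> int.
Hypothesis phiD : forall x y, phi (x + y) = phi x + phi y.

Definition key (x : FAb n) : seq int := phi x :: [seq x ord0 i | i <- enum 'I_n].
Definition ltk : rel (FAb n) := fun x y => lexlt (key x) (key y).

Lemma size_key x : size (key x) = n.+1.
Proof. by rewrite /= size_map size_enum_ord. Qed.

Lemma ltk_irr x : ~~ ltk x x.
Proof. exact: lexlt_irr. Qed.

Lemma ltk_trans x y z : ltk x y -> ltk y z -> ltk x z.
Proof. exact: lexlt_trans. Qed.

Lemma ltk_tot x y : x != y -> ltk x y || ltk y x.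
Proof.
move=> xy; case: (lexlt_total (etrans (size_key x) (esym (size_key y)))) => [E|[H|H]]; [|by rewrite /ltk H|by rewrite /ltk H orbT].
case/eqP: xy; case: E => _ /eq_in_map E.
apply/matrixP => i j; rewrite (ord1 i).
by apply: E; rewrite mem_enum.
Qed.

Lemma key_add x w : key (x + w) = addseq (key x) (key w).
Proof.
rewrite /key /= phiD addseq_map; congr (_ :: _).
by apply: eq_map => i; rewrite mxE.
Qed.

Lemma ltk_add x y w : ltk x y -> ltk (x + w) (y + w).
Proof.
by move=> H; rewrite /ltk !key_add lexlt_add // !size_key.
Qed.

Lemma ltk_mono x y : ltk x y -> phi x <= phi y.
Proof.
by rewrite /ltk /= => /orP [/ltW|/andP [/eqP -> _]].
Qed.

Lemma nonzero_ex (e : ZG n) : (forall y, e y = 0) \/ exists y, e y != 0.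
Proof.
case E: (finsupp e : seq _) => [|y0 s].
  left => y; apply: fsfun_dflt; rewrite -[y \in _]/(y \in (finsupp e : seq _)) E //.
right; exists y0; rewrite -mem_finsupp -[y0 \in _]/(y0 \in (finsupp e : seq _)) E.
by rewrite inE eqxx.
Qed.

Lemma level (d c f : ZG n) : gmul d c = f -> f 0 != 0 ->
  (forall z, f z != 0 -> phi z = 0) ->
  forall x y, d x != 0 -> d y != 0 -> phi x = phi y.
Proof.
move=> Hf f0 fz.
have dne : exists x, d x != 0.
  case: (nonzero_ex d) => // H; case/negP: f0; rewrite -Hf gmulE.
  by rewrite big_seq big1 // => u _; rewrite H mul0r.
have cne : exists x, c x != 0.
  case: (nonzero_ex c) => // H; case/negP: f0; rewrite -Hf gmulE.
  by rewrite big_seq big1 // => u _; rewrite H mulr0.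
have [a [b [da cb amax bmax Eab]]] := top ltk_irr ltk_trans ltk_tot ltk_add dne cne.
pose lt' : rel (FAb n) := fun x y => ltk y x.
have lt'irr x : ~~ lt' x x by exact: ltk_irr.
have lt'tr x y z : lt' x y -> lt' y z -> lt' x z by move=> H1 H2; exact: ltk_trans H2 H1.
have lt'tot x y : x != y -> lt' x y || lt' y x by move=> /ltk_tot; rewrite orbC.
have lt'add x y w : lt' x y -> lt' (x + w) (y + w) by exact: ltk_add.
have [a' [b' [da' cb' amin bmin Eab']]] := top lt'irr lt'tr lt'tot lt'add dne cne.
have H1 : phi a + phi b = 0.
  by rewrite -phiD; apply: fz; rewrite -Hf Eab mulf_neq0.
have H2 : phi a' + phi b' = 0.
  by rewrite -phiD; apply: fz; rewrite -Hf Eab' mulf_neq0.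
have H3 : phi b' <= phi b by case: (bmax _ cb') => [->|/ltk_mono].
have bnd z : d z != 0 -> phi a' <= phi z /\ phi z <= phi a.
  move=> dz; split; first by case: (amin _ dz) => [->|/ltk_mono].
  by case: (amax _ dz) => [->|/ltk_mono].
move=> x y /bnd [] ? ? /bnd [] ? ?; lia.
Qed.
End Level.

Section Main.
Variable n : nat.

Lemma onepmE s (g z : FAb n) :
  onepm s g z = (if z == 0 then 1 else 0) + (if s then (if z == g then 1 else 0) else - (if z == g then 1 else 0)).
Proof. by rewrite /onepm gaddE goneE; case: s; rewrite ?goppE gdeltaE. Qed.

Lemma onepm0 s (g : FAb n) : g != 0 -> onepm s g 0 = 1.
Proof. by move=> g0; rewrite onepmE eqxx eq_sym (negPf g0); case: s; rewrite ?oppr0 addr0. Qed.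

Lemma onepm_supp s (g z : FAb n) : onepm s g z != 0 -> z = 0 \/ z = g.
Proof.
rewrite onepmE; case: (eqVneq z 0) => [->|z0]; first by left.
case: (eqVneq z g) => [->|zg]; first by right.
by case: s; rewrite ?oppr0 addr0 eqxx.
Qed.

Lemma levelg (gg : FAb n) s (d c : ZG n) : gg != 0 -> gmul d c = onepm s gg ->
  forall i j x y, d x != 0 -> d y != 0 ->
  gg ord0 i * (x ord0 j - y ord0 j) = gg ord0 j * (x ord0 i - y ord0 i).
Proof.
move=> g0 Hf i j x y dx dy.
pose phi (z : FAb n) := gg ord0 i * z ord0 j - gg ord0 j * z ord0 i.
have phiD u w : phi (u + w) = phi u + phi w by rewrite /phi !mxE; ring.
have := @level n phi phiD d c (onepm s gg) Hf.
rewrite onepm0 // => /(_ isT) H.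
have : phi x = phi y.
  apply: H => // z /onepm_supp [->|->]; rewrite /phi ?mxE; ring.
move=> E; apply/eqP; rewrite -subr_eq0; apply/eqP.
transitivity (phi x - phi y); last by rewrite E subrr.
rewrite /phi; ring.
Qed.
End Main.

Theorem mainTheorem17 (n : nat) (g h : FAb n) :
  rank2 g h -> forall s t : bool, grelprime (onepm s g) (onepm t h).
Proof.
move=> rk s t d [c Hc] [c' Hc'].
have g0 : g != 0.
  apply/eqP => E; have := rk 1 0; rewrite E scaler0 scale0r addr0 => /(_ erefl) [] /eqP.
  by [].
have h0 : h != 0.
  apply/eqP => E; have := rk 0 1; rewrite E scaler0 scale0r add0r => /(_ erefl) [] _ /eqP.
  by [].
have [dz|[a da]] := nonzero_ex d.
  have := onepm0 s g0; rewrite -Hc gmulE big_seq big1 // => u _; by rewrite dz mul0r.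
have claim x : d x != 0 -> x = a.
  move=> dx; apply/matrixP => i k; rewrite (ord1 i).
  have P := levelg g0 Hc k _ dx da.
  have Q := levelg h0 Hc' k _ dx da.
  apply/eqP; rewrite -subr_eq0; apply/negPn/negP => vk.
  have w0 : h ord0 k *: g + (- g ord0 k) *: h = 0.
    apply/matrixP => i' j; rewrite (ord1 i') !mxE.
    have := P j; have := Q j => Pj Qj.
    have : (x ord0 k - a ord0 k) * (h ord0 k * g ord0 j + - g ord0 k * h ord0 j) = 0.
      have e1 : (x ord0 k - a ord0 k) * (h ord0 k * g ord0 j + - g ord0 k * h ord0 j)
        = h ord0 k * (g ord0 j * (x ord0 k - a ord0 k)) - g ord0 k * (h ord0 j * (x ord0 k - a ord0 k)) by ring.
      rewrite e1 -Pj -Qj; ring.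
    by move/eqP; rewrite mulf_eq0 (negPf vk) /= => /eqP.
  have [hk gk] := rk _ _ w0.
  have gk0 : g ord0 k = 0 by lia.
  case/eqP: g0; apply/matrixP => i' j; rewrite (ord1 i') mxE.
  have := P j; rewrite gk0 mul0r => /esym /eqP; rewrite mulf_eq0 (negPf vk) orbF => /eqP.
  done.
have Esupp : finsupp d = [fset a]%fset.
  apply/fsetP => z; rewrite in_fset1 mem_finsupp; apply/idP/eqP => [/claim|->] //.
have unit1 : d a * d a = 1.
  have := onepm0 s g0; rewrite -Hc gmulE Esupp big_seq_fset1 => E.
  rewrite mulrC in E; have := intUnitRing.unitzPl E.
  by rewrite qualifE => /orP [/eqP ->|/eqP ->]; rewrite ?mulrNN mulr1.
exists [fsfun x in [fset - a]%fset => d a | 0].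
apply/fsfunP => z; rewrite gmulE Esupp big_seq_fset1 fsfunE in_fset1 goneE.
rewrite subr_eq addNr; case: (z == 0) => //; by rewrite mulr0.
Qed.
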